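(* Let $N\ge1$ and let $f_1,\dots,f_{2N+2}:\mathbb{R}\to\mathbb{R}$ be continuous convex functions. Let $v_1=\min(f_1,\dots,f_{N+1})$, $v_2=\min(f_{N+2},\dots,f_{2N+2})$ and $v=\max(v_1,v_2)$. Then $$\mathcal{C}_v\subseteq \Psi_v:=\Big(\bigcup_{1\le i\le 2N+2}\mathcal{C}_{f_i}\Big)\cup\Big(\bigcup_{1\le i<j\le 2N+2}\mathcal{S}_{f_i,f_j}\Big).$$ Moreover, if $v$ attains its global minimum on $\mathbb{R}$, then the minimum of $v(x)$ over the set $\{x : (x,y)\in\Psi_v,\ v(x)=y\}$ is attained and equals $\min_{x\in\mathbb{R}}v(x)$; in particular a global minimizer of $v$ is given by $$x^*_v\in\arg\min_x\{v(x): (x,y)\in\Psi_v,\ v(x)=y\}.$$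
   Context: For a continuous function $g:\mathbb{R}\to\mathbb{R}$, a critical point of $g$ is a point $(x,g(x))$ such that either $g$ is not differentiable at $x$ or $g'(x)=0$; $\mathcal{C}_g$ denotes the set of critical points of $g$. For two functions $g,h:\mathbb{R}\to\mathbb{R}$, $\mathcal{S}_{g,h}=\{(x,g(x)):x\in\mathbb{R},\ g(x)=h(x)\}$. Minima and maxima of functions are taken pointwise. *)

(* Defs.v *)
From Stdlib Require Import Reals Lra.
Open Scope R_scope.

Definition convex_fun (g : R -> R) : Prop :=
  forall x y t, 0 <= t <= 1 ->
    g (t * x + (1 - t) * y) <= t * g x + (1 - t) * g y.

Definition critical_pt (g : R -> R) (x y : R) : Prop :=
  y = g x /\ ((~ exists l, derivable_pt_lim g x l) \/ derivable_pt_lim g x 0).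

Definition S_pt (g h : R -> R) (x y : R) : Prop :=
  y = g x /\ g x = h x.

Fixpoint min_range (f : nat -> R -> R) (a k : nat) (x : R) : R :=
  match k with
  | O => f a x
  | S k' => Rmin (min_range f a k' x) (f (a + k)%nat x)
  end.

Definition Psi (f : nat -> R -> R) (N : nat) (x y : R) : Prop :=
  (exists i, (1 <= i <= 2 * N + 2)%nat /\ critical_pt (f i) x y) \/
  (exists i j, (1 <= i)%nat /\ (i < j)%nat /\ (j <= 2 * N + 2)%nat /\
               S_pt (f i) (f j) x y).

(* Main.v *)
Require Import Defs.
From Stdlib Require Import Reals Lra Lia Classical.
Open Scope R_scope.

Definition loc (x : R) (P : R -> Prop) : Prop :=
  exists d, 0 < d /\ forall y, Rabs (y - x) < d -> P y.

Lemma loc_and x (P Q : R -> Prop) : loc x P -> loc x Q -> loc x (fun y => P y /\ Q y).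
Proof.
  intros [d1 [H1 P1]] [d2 [H2 P2]]. exists (Rmin d1 d2). split.
  - apply Rmin_pos; auto.
  - intros y Hy. split; [apply P1 | apply P2];
      eapply Rlt_le_trans; eauto; [apply Rmin_l | apply Rmin_r].
Qed.

Lemma loc_impl x (P Q : R -> Prop) : loc x P -> (forall y, P y -> Q y) -> loc x Q.
Proof. intros [d [H1 P1]] HPQ. exists d. split; auto. Qed.

Lemma loc_lt (g h : R -> R) x : continuity_pt g x -> continuity_pt h x ->
  g x < h x -> loc x (fun y => g y < h y).
Proof.
  intros Hg Hh Hlt.
  assert (Hc := continuity_pt_minus h g x Hh Hg).
  destruct (Hc (h x - g x)) as [d [dp Hd]]; [lra|].
  exists d. split; auto. intros y Hy.
  specialize (Hd y). unfold D_x, no_cond in Hd. simpl in Hd. unfold R_dist in Hd.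
  unfold minus_fct in Hd.
  destruct (Req_dec y x) as [->|Hne]; [lra|].
  assert (Hd' := Hd (conj (conj I (not_eq_sym Hne)) Hy)).
  apply Rabs_def2 in Hd'. lra.
Qed.

Lemma min_range_le f a n x i : (a <= i <= a + n)%nat -> min_range f a n x <= f i x.
Proof.
  induction n; intros Hi; simpl.
  - replace i with a by lia. lra.
  - destruct (Nat.eq_dec i (a + S n)) as [->|Hne].
    + apply Rmin_r.
    + eapply Rle_trans; [apply Rmin_l|]. apply IHn. lia.
Qed.

Lemma min_range_ex f a n x : exists i, (a <= i <= a + n)%nat /\ min_range f a n x = f i x.
Proof.
  induction n; simpl.
  - exists a. split; [lia|reflexivity].
  - destruct IHn as [i [Hi Ei]]. unfold Rmin. destruct (Rle_dec _ _).
    + exists i. split; [lia|auto].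
    + exists (a + S n)%nat. split; [lia|auto].
Qed.

Lemma lemA f a n x (c : R -> R) :
  (forall i, (a <= i <= a + n)%nat -> continuity (f i)) -> continuity_pt c x ->
  (forall i, (a <= i <= a + n)%nat -> c x < f i x) ->
  loc x (fun y => c y < min_range f a n y).
Proof.
  intros Hc Hcc. induction n; intros Hlt; simpl.
  - replace (a + 0)%nat with a in * by lia. apply loc_lt; [exact Hcc | apply Hc; lia | apply Hlt; lia].
  - assert (L1 : loc x (fun y => c y < min_range f a n y)).
    { apply IHn; intros i Hi; first [apply Hc; lia | apply Hlt; lia]. }
    assert (L2 : loc x (fun y => c y < f (a + S n)%nat y)).
    { apply loc_lt; [exact Hcc | apply Hc; lia | apply Hlt; lia]. }
    eapply loc_impl. apply (loc_and _ _ _ L1 L2).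
    intros y [H1 H2]. apply Rmin_glb_lt; auto.
Qed.

Lemma lemA' f a n x (c : R -> R) j :
  (a <= j <= a + n)%nat -> continuity (f j) -> continuity_pt c x ->
  f j x < c x -> loc x (fun y => min_range f a n y < c y).
Proof.
  intros Hj Hc Hcc Hlt. eapply loc_impl. apply (loc_lt (f j) c x (Hc x) Hcc Hlt).
  intros y Hy. eapply Rle_lt_trans; [apply min_range_le; eauto | auto].
Qed.

Lemma lemB f a n x k :
  (forall i, (a <= i <= a + n)%nat -> continuity (f i)) ->
  (a <= k <= a + n)%nat ->
  (forall i, (a <= i <= a + n)%nat -> i <> k -> f k x < f i x) ->
  loc x (fun y => min_range f a n y = f k y).
Proof.
  intros Hc. induction n; intros Hk Hlt; simpl.
  - exists 1. split; [lra|]. intros y _. replace k with a by lia. reflexivity.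
  - destruct (Nat.eq_dec k (a + S n)) as [->|Hne].
    + eapply loc_impl. apply (lemA f a n x (f (a + S n)%nat)).
      * intros i Hi; apply Hc; lia.
      * apply Hc; lia.
      * intros i Hi; apply Hlt; lia.
      * intros y Hy. apply Rmin_right. lra.
    + assert (L1 : loc x (fun y => min_range f a n y = f k y)).
      { apply IHn; [intros i Hi; apply Hc; lia | lia | intros i Hi Hne'; apply Hlt; lia]. }
      assert (L2 : loc x (fun y => f k y < f (a + S n)%nat y)).
      { apply loc_lt; [apply Hc; lia | apply Hc; lia | apply Hlt; lia]. }
      eapply loc_impl. apply (loc_and _ _ _ L1 L2).
      intros y [H1 H2]. rewrite Rmin_left; lra.
Qed.

Lemma deriv_loc (g h : R -> R) x l : loc x (fun y => g y = h y) ->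
  derivable_pt_lim g x l -> derivable_pt_lim h x l.
Proof.
  intros [d [dp Hd]] D. apply (derivable_pt_lim_locally_ext g h x (x - d) (x + d)); auto.
  lra. intros z Hz. apply Hd. apply Rabs_def1; lra.
Qed.

Lemma part1 (N : nat) (f : nat -> R -> R)
  (Hcont : forall i, (1 <= i <= 2 * N + 2)%nat -> continuity (f i)) :
  let v1 := min_range f 1 N in
  let v2 := min_range f (N + 2) N in
  let v := fun x => Rmax (v1 x) (v2 x) in
  (forall x y, critical_pt v x y -> Psi f N x y).
Proof.
  intros v1 v2 v x y [Ey Hcr].
  destruct (classic (exists i j, (1 <= i)%nat /\ (i < j)%nat /\ (j <= 2 * N + 2)%nat /\
               S_pt (f i) (f j) x y)) as [Hs|Hs]; [right; exact Hs|].
  assert (H2 : forall i j, (1 <= i)%nat -> (i < j)%nat -> (j <= 2 * N + 2)%nat ->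
     f i x = v x -> f j x = v x -> False).
  { intros i j ? ? ? E1 E2. apply Hs. exists i, j. repeat split; auto; congruence. }
  assert (Hk : exists k, (1 <= k <= 2 * N + 2)%nat /\ f k x = v x /\
                 loc x (fun z => v z = f k z)).
  { destruct (min_range_ex f 1 N x) as [i [Hi Ei]].
    destruct (min_range_ex f (N + 2) N x) as [j [Hj Ej]].
    fold v1 in Ei. fold v2 in Ej.
    unfold v, Rmax. destruct (Rle_dec (v1 x) (v2 x)) as [Hle|Hle].
    -
      assert (Hlt : v1 x < v2 x).
      { destruct Hle as [?|Heq]; auto. exfalso. apply (H2 i j); try lia;
        unfold v, Rmax; destruct (Rle_dec _ _); lra. }
      exists j. split; [lia|]. split; [lra|].
      assert (Hl1 : loc x (fun z => v2 z = f j z)).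
      { apply lemB. intros i' Hi'; apply Hcont; lia. lia.
        intros i' Hi' Hne. assert (Hle' := min_range_le f (N+2) N x i' Hi'). fold v2 in Hle'.
        destruct (Rle_lt_or_eq_dec _ _ Hle') as [?|Heq]; [lra|]. exfalso.
        destruct (Nat.lt_ge_cases i' j).
        - apply (H2 i' j); try lia; unfold v, Rmax; destruct (Rle_dec _ _); lra.
        - apply (H2 j i'); try lia; unfold v, Rmax; destruct (Rle_dec _ _); lra. }
      assert (Hl2 : loc x (fun z => v1 z < f j z)).
      { apply (lemA' f 1 N x (f j) i); auto. apply Hcont; lia. apply Hcont; lia. lra. }
      eapply loc_impl. apply (loc_and _ _ _ Hl1 Hl2). intros z [E L].
      unfold Rmax. destruct (Rle_dec _ _); lra.
    - exists i. split; [lia|]. split; [lra|].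
      assert (Hlt : v2 x < v1 x) by lra.
      assert (Hl1 : loc x (fun z => v1 z = f i z)).
      { apply lemB. intros i' Hi'; apply Hcont; lia. lia.
        intros i' Hi' Hne. assert (Hle' := min_range_le f 1 N x i' Hi'). fold v1 in Hle'.
        destruct (Rle_lt_or_eq_dec _ _ Hle') as [?|Heq]; [lra|]. exfalso.
        destruct (Nat.lt_ge_cases i' i).
        - apply (H2 i' i); try lia; unfold v, Rmax; destruct (Rle_dec _ _); lra.
        - apply (H2 i i'); try lia; unfold v, Rmax; destruct (Rle_dec _ _); lra. }
      assert (Hl2 : loc x (fun z => v2 z < f i z)).
      { apply (lemA' f (N+2) N x (f i) j); auto. apply Hcont; lia. apply Hcont; lia. lra. }
      eapply loc_impl. apply (loc_and _ _ _ Hl1 Hl2). intros z [E L].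
      unfold Rmax. destruct (Rle_dec _ _); lra. }
  destruct Hk as [k [Hkr [Ek Lk]]].
  left. exists k. split; auto. split; [congruence|].
  assert (Lk' : loc x (fun z => f k z = v z)).
  { eapply loc_impl; [exact Lk|]. intros z Hz; symmetry; exact Hz. }
  destruct Hcr as [Hnd|Hd].
  - left. intros [l Hl]. apply Hnd. exists l. eapply deriv_loc; eauto.
  - right. eapply deriv_loc; eauto.
Qed.

Theorem corollary1 (N : nat) (f : nat -> R -> R)
  (HN : (1 <= N)%nat)
  (Hcont : forall i, (1 <= i <= 2 * N + 2)%nat -> continuity (f i))
  (Hconv : forall i, (1 <= i <= 2 * N + 2)%nat -> convex_fun (f i)) :
  let v1 := min_range f 1 N in
  let v2 := min_range f (N + 2) N in
  let v := fun x => Rmax (v1 x) (v2 x) in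
  (forall x y, critical_pt v x y -> Psi f N x y) /\
  ((exists x0, forall x, v x0 <= v x) ->
   exists xs,
     (exists y, Psi f N xs y /\ v xs = y) /\
     (forall x y, Psi f N x y -> v x = y -> v xs <= v x) /\
     (forall z, v xs <= v z)).
Proof.
  intros v1 v2 v.
  assert (P1 := part1 N f Hcont). simpl in P1.
  split; [exact P1|].
  intros [x0 Hx0]. exists x0. split; [|split; auto].
  exists (v x0). split; auto. apply P1. split; auto.
  destruct (classic (exists l, derivable_pt_lim v x0 l)) as [[l Hl]|Hn]; [right|left; auto].
  assert (E := deriv_minimum v (x0 - 1) (x0 + 1) x0 (exist _ l Hl)).
  simpl in E. rewrite <- E; auto; lra.
Qed.
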